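(* Let $X$ be a continuum (a connected compact metric space). Then for every real $t \ge \operatorname{diam} X$ with $t>0$ and every positive integer $p$, $$d_{GH}(t\Delta_p, X) = d_{GH}\bigl(\mathcal{H}(t\Delta_p), \mathcal{H}(X)\bigr).$$
   Context: A simplex $t\Delta_p$ is the metric space with $p$ points, any two distinct ones at distance $t$. For a compact metric space $X$, $\mathcal{H}(X)$ is the set of all nonempty closed subsets of $X$ with the Hausdorff distance $|AB| = \max\{\sup_{a\in A}\inf_{b\in B}|ab|, \sup_{b\in B}\inf_{a\in A}|ab|\}$. $d_{GH}$ is the Gromov–Hausdorff distance (the infimum of $r$ such that there is a metric space $Z$ containing isometric copies $X',Y'$ of the two spaces with Hausdorff distance $|X'Y'|_Z\le r$). *)

(* Defs.v *)
From Stdlib Require Import Reals Lra ClassicalEpsilon.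
Open Scope R_scope.

Record MSpace := { carrier :> Type; dist : carrier -> carrier -> R }.
Arguments dist {m} _ _.

Definition is_metric (X : MSpace) : Prop :=
  (forall x y : X, 0 <= dist x y) /\
  (forall x y : X, dist x y = 0 <-> x = y) /\
  (forall x y : X, dist x y = dist y x) /\
  (forall x y z : X, dist x z <= dist x y + dist y z).

(* Supremum / infimum of a set of reals (meaningful for nonempty bounded sets). *)
Definition Rsup (E : R -> Prop) : R := epsilon (inhabits 0) (fun s => is_lub E s).
Definition Rinf (E : R -> Prop) : R := - Rsup (fun x => E (- x)).

Definition hausdorff {X : MSpace} (A B : X -> Prop) : R :=
  Rmax (Rsup (fun r => exists a, A a /\ r = Rinf (fun s => exists b, B b /\ s = dist a b)))
       (Rsup (fun r => exists b, B b /\ r = Rinf (fun s => exists a, A a /\ s = dist a b))).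

Definition is_closed {X : MSpace} (A : X -> Prop) : Prop :=
  forall x : X, (forall eps, 0 < eps -> exists a, A a /\ dist x a < eps) -> A x.

Definition is_open {X : MSpace} (U : X -> Prop) : Prop :=
  forall x : X, U x -> exists eps, 0 < eps /\ forall y, dist x y < eps -> U y.

(* Sequential compactness (equivalent to compactness for metric spaces). *)
Definition compact (X : MSpace) : Prop :=
  forall u : nat -> X, exists (phi : nat -> nat) (l : X),
    (forall n, (phi n < phi (S n))%nat) /\
    (forall eps, 0 < eps -> exists N, forall n, (N <= n)%nat -> dist (u (phi n)) l < eps).

Definition connected (X : MSpace) : Prop :=
  forall U : X -> Prop, is_open U -> is_closed U ->
    (forall x, U x) \/ (forall x, ~ U x).

Definition continuum (X : MSpace) : Prop :=
  is_metric X /\ inhabited X /\ compact X /\ connected X.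

Definition diam (X : MSpace) : R :=
  Rsup (fun r => exists x y : X, r = dist x y).

Definition simplex (t : R) (p : nat) : MSpace :=
  {| carrier := { i : nat | (i < p)%nat };
     dist := fun i j => if Nat.eq_dec (proj1_sig i) (proj1_sig j) then 0 else t |}.

Definition hyperspace (X : MSpace) : MSpace :=
  {| carrier := { A : X -> Prop | is_closed A /\ exists x, A x };
     dist := fun A B => hausdorff (proj1_sig A) (proj1_sig B) |}.

Definition isometric_embedding {X Z : MSpace} (f : X -> Z) : Prop :=
  forall x y : X, dist (f x) (f y) = dist x y.

Definition image {X Z : MSpace} (f : X -> Z) : Z -> Prop :=
  fun z => exists x, f x = z.

Definition dGH (X Y : MSpace) : R :=
  Rinf (fun r => exists (Z : MSpace) (f : X -> Z) (g : Y -> Z),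
          is_metric Z /\ isometric_embedding f /\ isometric_embedding g /\
          hausdorff (image f) (image g) <= r).

(* Main.v *)
Require Import Defs.
From Stdlib Require Import Reals Lra Lia ClassicalEpsilon Classical List FunctionalExtensionality PropExtensionality ProofIrrelevance.
Require Import Defs.
Open Scope R_scope.

Lemma Rsup_eq (E : R -> Prop) s : is_lub E s -> Rsup E = s.
Proof.
  intros Hs. unfold Rsup.
  pose proof (epsilon_spec (inhabits 0) (fun s => is_lub E s) (ex_intro _ s Hs)) as H.
  set (m := epsilon _ _) in *.
  destruct H as [H1 H2]; destruct Hs as [H3 H4].
  apply Rle_antisym; [apply H2; exact H3 | apply H4; exact H1].
Qed.

Lemma Rsup_lub (E : R -> Prop) : (exists x, E x) -> (exists M, forall x, E x -> x <= M) ->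
  is_lub E (Rsup E).
Proof.
  intros Hne [M HM].
  destruct (completeness E (ex_intro _ M HM) Hne) as [m Hm].
  rewrite (Rsup_eq E m Hm). exact Hm.
Qed.

Lemma Rsup_ge (E : R -> Prop) x : (exists M, forall x, E x -> x <= M) -> E x -> x <= Rsup E.
Proof. intros HM Hx. apply (Rsup_lub E (ex_intro _ x Hx) HM). exact Hx. Qed.

Lemma Rsup_le (E : R -> Prop) M : (exists x, E x) -> (forall x, E x -> x <= M) -> Rsup E <= M.
Proof. intros Hne HM. apply (Rsup_lub E Hne (ex_intro _ M HM)). exact HM. Qed.

Lemma Rinf_le (E : R -> Prop) x : (exists m, forall x, E x -> m <= x) -> E x -> Rinf E <= x.
Proof.
  intros [m Hm] Hx. unfold Rinf.
  assert (- x <= Rsup (fun y => E (- y))).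
  { apply Rsup_ge. exists (-m). intros y Hy. specialize (Hm _ Hy). lra.
    rewrite Ropp_involutive. exact Hx. }
  lra.
Qed.

Lemma Rinf_ge (E : R -> Prop) m : (exists x, E x) -> (forall x, E x -> m <= x) -> m <= Rinf E.
Proof.
  intros [x Hx] Hm. unfold Rinf.
  assert (Rsup (fun y => E (- y)) <= - m).
  { apply Rsup_le. exists (-x). rewrite Ropp_involutive. exact Hx.
    intros y Hy. specialize (Hm _ Hy). lra. }
  lra.
Qed.

Lemma Rinf_lt (E : R -> Prop) m : (exists x, E x) -> Rinf E < m -> exists x, E x /\ x < m.
Proof.
  intros Hne Hlt. apply NNPP. intros Hn.
  assert (m <= Rinf E). { apply Rinf_ge; auto. intros x Hx. apply Rnot_lt_le.
    intros Hxm. apply Hn. eauto. }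
  lra.
Qed.

Lemma Rinf_char (E : R -> Prop) v : (forall r, E r -> v <= r) ->
  (forall eps, 0 < eps -> E (v + eps)) -> Rinf E = v.
Proof.
  intros H1 H2. unfold Rinf.
  rewrite (Rsup_eq _ (- v)). lra.
  split.
  - intros x Hx. specialize (H1 _ Hx). lra.
  - intros b Hb. apply Rnot_lt_le. intros Hlt.
    assert (Hp : 0 < (-v - b)/2) by lra.
    specialize (H2 _ Hp). specialize (Hb (- (v + (-v-b)/2))).
    cbv beta in Hb. rewrite Ropp_involutive in Hb. specialize (Hb H2). lra.
Qed.

Definition inner {X : MSpace} (a : X) (B : X -> Prop) :=
  Rinf (fun s => exists b, B b /\ s = dist a b).
Definition inner' {X : MSpace} (b : X) (A : X -> Prop) :=
  Rinf (fun s => exists a, A a /\ s = dist a b).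

Lemma haus_unfold {X : MSpace} (A B : X -> Prop) : hausdorff A B =
  Rmax (Rsup (fun r => exists a, A a /\ r = inner a B))
       (Rsup (fun r => exists b, B b /\ r = inner' b A)).
Proof. reflexivity. Qed.

Definition nonnegd (X : MSpace) := forall x y : X, 0 <= dist x y.

Lemma inner_le {X : MSpace} (hX : nonnegd X) (a b : X) B : B b -> inner a B <= dist a b.
Proof. intros Hb. apply Rinf_le. exists 0. intros x [c [_ ->]]. apply hX. eauto. Qed.
Lemma inner'_le {X : MSpace} (hX : nonnegd X) (a b : X) A : A a -> inner' b A <= dist a b.
Proof. intros Ha. apply Rinf_le. exists 0. intros x [c [_ ->]]. apply hX. eauto. Qed.

Lemma inner_ge {X : MSpace} (a : X) B m : (exists b, B b) -> (forall b, B b -> m <= dist a b) -> m <= inner a B.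
Proof. intros [b Hb] H. apply Rinf_ge. eauto. intros x [c [Hc ->]]. auto. Qed.
Lemma inner'_ge {X : MSpace} (b : X) A m : (exists a, A a) -> (forall a, A a -> m <= dist a b) -> m <= inner' b A.
Proof. intros [a Ha] H. apply Rinf_ge. eauto. intros x [c [Hc ->]]. auto. Qed.

Lemma inner_lt {X : MSpace} (a : X) B m : (exists b, B b) -> inner a B < m -> exists b, B b /\ dist a b < m.
Proof. intros [b Hb] H. destruct (Rinf_lt _ _ (ex_intro _ _ (ex_intro _ b (conj Hb eq_refl))) H) as [x [[c [Hc ->]] Hx]]. eauto. Qed.
Lemma inner'_lt {X : MSpace} (b : X) A m : (exists a, A a) -> inner' b A < m -> exists a, A a /\ dist a b < m.
Proof. intros [a Ha] H. destruct (Rinf_lt _ _ (ex_intro _ _ (ex_intro _ a (conj Ha eq_refl))) H) as [x [[c [Hc ->]] Hx]]. eauto. Qed.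

Lemma inner_nonneg {X : MSpace} (hX : nonnegd X) (a : X) B : (exists b, B b) -> 0 <= inner a B.
Proof. intros. apply inner_ge; auto. Qed.

Lemma haus_le {X : MSpace} (hX : nonnegd X) (A B : X -> Prop) e : (exists a, A a) -> (exists b, B b) ->
  (forall a, A a -> forall d, 0 < d -> exists b, B b /\ dist a b < e + d) ->
  (forall b, B b -> forall d, 0 < d -> exists a, A a /\ dist a b < e + d) ->
  hausdorff A B <= e.
Proof.
  intros [a0 Ha0] [b0 Hb0] H1 H2. rewrite haus_unfold. apply Rmax_lub.
  - apply Rsup_le. eauto. intros x [a [Ha ->]].
    apply Rnot_lt_le. intros Hlt.
    destruct (H1 a Ha (inner a B - e)) as [b [Hb Hd]]. lra.
    pose proof (inner_le hX a b B Hb). lra.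
  - apply Rsup_le. eauto. intros x [b [Hb ->]].
    apply Rnot_lt_le. intros Hlt.
    destruct (H2 b Hb (inner' b A - e)) as [a [Ha Hd]]. lra.
    pose proof (inner'_le hX a b A Ha). lra.
Qed.

Lemma haus_ge1 {X : MSpace} (hX : nonnegd X) (A B : X -> Prop) M : (exists b, B b) ->
  (forall a b, A a -> B b -> dist a b <= M) -> forall a, A a -> inner a B <= hausdorff A B.
Proof.
  intros [b0 Hb0] HM a Ha. rewrite haus_unfold. eapply Rle_trans; [|apply Rmax_l].
  apply Rsup_ge; [|eauto]. exists M. intros x [a' [Ha' ->]].
  eapply Rle_trans. apply (inner_le hX a' b0 B Hb0). auto.
Qed.

Lemma haus_ge2 {X : MSpace} (hX : nonnegd X) (A B : X -> Prop) M : (exists a, A a) ->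
  (forall a b, A a -> B b -> dist a b <= M) -> forall b, B b -> inner' b A <= hausdorff A B.
Proof.
  intros [a0 Ha0] HM b Hb. rewrite haus_unfold. eapply Rle_trans; [|apply Rmax_r].
  apply Rsup_ge; [|eauto]. exists M. intros x [b' [Hb' ->]].
  eapply Rle_trans. apply (inner'_le hX a0 b' A Ha0). auto.
Qed.

Lemma haus_ext1 {X : MSpace} (hX : nonnegd X) (A B : X -> Prop) M r : (exists b, B b) ->
  (forall a b, A a -> B b -> dist a b <= M) -> hausdorff A B <= r ->
  forall a, A a -> forall d, 0 < d -> exists b, B b /\ dist a b < r + d.
Proof.
  intros Hb HM Hr a Ha d Hd. apply inner_lt; auto.
  pose proof (haus_ge1 hX A B M Hb HM a Ha). lra.
Qed.

Lemma haus_ext2 {X : MSpace} (hX : nonnegd X) (A B : X -> Prop) M r : (exists a, A a) ->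
  (forall a b, A a -> B b -> dist a b <= M) -> hausdorff A B <= r ->
  forall b, B b -> forall d, 0 < d -> exists a, A a /\ dist a b < r + d.
Proof.
  intros Ha HM Hr b Hb d Hd. apply inner'_lt; auto.
  pose proof (haus_ge2 hX A B M Ha HM b Hb). lra.
Qed.

Lemma haus_nonneg {X : MSpace} (hX : nonnegd X) (A B : X -> Prop) M : (exists a, A a) -> (exists b, B b) ->
  (forall a b, A a -> B b -> dist a b <= M) -> 0 <= hausdorff A B.
Proof.
  intros [a Ha] Hb HM. eapply Rle_trans; [|apply (haus_ge1 hX A B M Hb HM a Ha)].
  apply inner_nonneg; auto.
Qed.

Lemma inner_sym {X : MSpace} (hX : is_metric X) (b : X) A : inner b A = inner' b A.
Proof.
  unfold inner, inner'. f_equal. apply functional_extensionality. intros s.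
  apply propositional_extensionality. destruct hX as [_ [_ [Hs _]]].
  split; intros [a [Ha ->]]; exists a; split; auto.
Qed.

Lemma haus_sym {X : MSpace} (hX : is_metric X) (A B : X -> Prop) : hausdorff A B = hausdorff B A.
Proof.
  rewrite !haus_unfold. rewrite Rmax_comm. f_equal; f_equal; apply functional_extensionality; intros s;
  apply propositional_extensionality; split; intros [a [Ha ->]]; exists a; split; auto;
  first [apply inner_sym; auto | symmetry; apply inner_sym; auto].
Qed.

Lemma hyper_metric (X : MSpace) (hX : is_metric X) (M : R) (HM : forall x y : X, dist x y <= M) :
  is_metric (hyperspace X).
Proof.
  assert (hn : nonnegd X) by (unfold nonnegd; apply hX).
  destruct hX as [H0 [H1 [H2 H3]]].
  assert (HB : forall A B : X -> Prop, forall a b, A a -> B b -> dist a b <= M) by (intros; apply HM).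
  split; [|split; [|split]].
  - intros [A [HA [a Ha]]] [B [HB' [b Hb]]]. simpl. eapply haus_nonneg; eauto.
  - intros [A [HA [a Ha]]] [B [HB' [b Hb]]]. simpl. split.
    + intros Hz.
      assert (HAB : A = B).
      { apply functional_extensionality; intros x; apply propositional_extensionality; split.
        - intros Hx. apply HB'. intros eps Heps.
          destruct (haus_ext1 hn A B M 0 (ex_intro _ b Hb) (HB A B) (Req_le _ _ Hz) x Hx eps Heps) as [y [Hy Hd]].
          exists y. split; auto. lra.
        - intros Hx. apply HA. intros eps Heps.
          destruct (haus_ext2 hn A B M 0 (ex_intro _ a Ha) (HB A B) (Req_le _ _ Hz) x Hx eps Heps) as [y [Hy Hd]].
          exists y. split; auto. rewrite H2. lra. }
      subst B. f_equal. apply proof_irrelevance.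
    + intros Heq. injection Heq as ->. apply Rle_antisym.
      * apply haus_le; eauto.
        -- intros x Hx d Hd. exists x. split; auto. assert (dist x x = 0) by (apply H1; auto). lra.
        -- intros x Hx d Hd. exists x. split; auto. assert (dist x x = 0) by (apply H1; auto). lra.
      * eapply haus_nonneg; eauto.
  - intros [A [HA [a Ha]]] [B [HB' [b Hb]]]. simpl. apply haus_sym. split; auto.
  - intros [A [HA [a Ha]]] [B [HB' [b Hb]]] [C [HC [c Hc]]]. simpl.
    set (h1 := hausdorff A B). set (h2 := hausdorff B C).
    apply haus_le; eauto.
    + intros x Hx d Hd.
      destruct (haus_ext1 hn A B M h1 (ex_intro _ b Hb) (HB A B) (Rle_refl _) x Hx (d/2)) as [y [Hy Hd1]]. lra.
      destruct (haus_ext1 hn B C M h2 (ex_intro _ c Hc) (HB B C) (Rle_refl _) y Hy (d/2)) as [z [Hz Hd2]]. lra.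
      exists z. split; auto. specialize (H3 x y z). lra.
    + intros z Hz d Hd.
      destruct (haus_ext2 hn B C M h2 (ex_intro _ b Hb) (HB B C) (Rle_refl _) z Hz (d/2)) as [y [Hy Hd1]]. lra.
      destruct (haus_ext2 hn A B M h1 (ex_intro _ a Ha) (HB A B) (Rle_refl _) y Hy (d/2)) as [x [Hx Hd2]]. lra.
      exists x. split; auto. specialize (H3 x y z). lra.
Qed.

Definition sumZ (S Y : MSpace) (c : R) : MSpace :=
  {| carrier := (S + Y)%type;
     dist := fun u v => match u, v with
       | inl a, inl a' => dist a a'
       | inr y, inr y' => dist y y'
       | _, _ => c end |}.

Lemma sumZ_metric (S Y : MSpace) c : is_metric S -> is_metric Y -> 0 < c ->
  (forall a a' : S, dist a a' <= 2 * c) -> (forall y y' : Y, dist y y' <= 2 * c) ->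
  is_metric (sumZ S Y c).
Proof.
  intros [S0 [S1 [S2 S3]]] [Y0 [Y1 [Y2 Y3]]] Hc HS HY.
  split; [|split; [|split]].
  - intros [a|y] [a'|y']; simpl; auto; lra.
  - intros [a|y] [a'|y']; simpl; split; intros H.
    + f_equal; apply S1; auto.
    + injection H as ->; apply S1; auto.
    + lra.
    + discriminate.
    + lra.
    + discriminate.
    + f_equal; apply Y1; auto.
    + injection H as ->; apply Y1; auto.
  - intros [a|y] [a'|y']; simpl; auto.
  - intros [a|y] [a'|y'] [a''|y'']; simpl; auto; try lra.
    all: try (pose proof (S0 a a'); pose proof (S0 a' a''); pose proof (HS a a''); lra).
    all: try (pose proof (Y0 y y'); pose proof (Y0 y' y''); pose proof (HY y y''); lra).
    all: try (pose proof (S0 a a'); lra).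
    all: try (pose proof (S0 a' a''); lra).
    all: try (pose proof (S0 a a''); lra).
    all: try (pose proof (Y0 y y'); lra).
    all: try (pose proof (Y0 y' y''); lra).
    all: try (pose proof (Y0 y y''); lra).
    all: try (pose proof (HS a a''); lra).
    all: try (pose proof (HY y y''); lra).
Qed.

Definition GHset (S Y : MSpace) (r : R) : Prop := exists (Z : MSpace) (f : S -> Z) (g : Y -> Z),
  is_metric Z /\ isometric_embedding f /\ isometric_embedding g /\
  hausdorff (image f) (image g) <= r.

Lemma dGH_unfold S Y : dGH S Y = Rinf (GHset S Y).
Proof. reflexivity. Qed.

Lemma GH_upper (S Y : MSpace) c : is_metric S -> is_metric Y -> 0 < c -> inhabited S -> inhabited Y ->
  (forall a a' : S, dist a a' <= 2 * c) -> (forall y y' : Y, dist y y' <= 2 * c) ->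
  GHset S Y c.
Proof.
  intros HSm HYm Hc [s0] [y0] HS HY.
  pose proof (sumZ_metric S Y c HSm HYm Hc HS HY) as HZ.
  exists (sumZ S Y c), inl, inr. split; [auto|split; [|split]].
  - intros a a'; reflexivity.
  - intros a a'; reflexivity.
  - apply haus_le.
    + unfold nonnegd; apply HZ.
    + exists (inl s0), s0; auto.
    + exists (inr y0), y0; auto.
    + intros u [a <-] d Hd. exists (inr y0). split. exists y0; auto. simpl; lra.
    + intros u [y <-] d Hd. exists (inl s0). split. exists s0; auto. simpl; lra.
Qed.

Lemma GH_extract (S Y Z : MSpace) (f : S -> Z) (g : Y -> Z) Bs By r :
  is_metric Z -> isometric_embedding f -> isometric_embedding g -> inhabited S -> inhabited Y ->
  (forall a a' : S, dist a a' <= Bs) -> (forall y y' : Y, dist y y' <= By) ->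
  hausdorff (image f) (image g) <= r ->
  (forall a d, 0 < d -> exists y, dist (f a) (g y) < r + d) /\
  (forall y d, 0 < d -> exists a, dist (f a) (g y) < r + d).
Proof.
  intros HZ Hf Hg [s0] [y0] HS HY Hr.
  assert (hn : nonnegd Z) by (unfold nonnegd; apply HZ).
  destruct HZ as [Z0 [Z1 [Z2 Z3]]].
  set (M := Bs + dist (f s0) (g y0) + By).
  assert (HM : forall u v, image f u -> image g v -> dist u v <= M).
  { intros u v [a <-] [y <-]. unfold M.
    pose proof (Z3 (f a) (f s0) (g y)). pose proof (Z3 (f s0) (g y0) (g y)).
    rewrite Hf in *. rewrite Hg in *. specialize (HS a s0). specialize (HY y0 y). lra. }
  split.
  - intros a d Hd.
    destruct (haus_ext1 hn (image f) (image g) M r (ex_intro _ (g y0) (ex_intro _ y0 eq_refl)) HM Hr (f a) (ex_intro _ a eq_refl) d Hd) as [v [[y <-] Hv]].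
    eauto.
  - intros y d Hd.
    destruct (haus_ext2 hn (image f) (image g) M r (ex_intro _ (f s0) (ex_intro _ s0 eq_refl)) HM Hr (g y) (ex_intro _ y eq_refl) d Hd) as [v [[a <-] Hv]].
    eauto.
Qed.

Inductive chain {Y : MSpace} (e : R) : Y -> Y -> Prop :=
| ch_refl y : chain e y y
| ch_step y z w : chain e y z -> dist z w < e -> chain e y w.

Definition chained (Y : MSpace) := forall e, 0 < e -> forall y w : Y, chain e y w.

Lemma ghA (S Y : MSpace) (t : R) : 0 < t -> is_metric S -> (forall a c : S, dist a c <= t) ->
  (forall a c : S, dist a c < t -> dist a c = 0) -> (exists a b : S, t <= dist a b) ->
  is_metric Y -> inhabited Y -> (forall y y' : Y, dist y y' <= t) -> chained Y ->
  dGH S Y = t / 2.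
Proof.
  intros Ht HSm HSt HS0 [a [b Hab]] HYm HYi HYt HYc.
  rewrite dGH_unfold. apply Rinf_char.
  - intros r [Z [f [g [HZ [Hf [Hg Hr]]]]]].
    apply Rnot_lt_le; intros Hlt.
    destruct (GH_extract S Y Z f g t t r HZ Hf Hg (inhabits a) HYi HSt HYt Hr) as [E1 E2].
    set (d0 := (t/2 - r)/2).
    assert (Hd0 : 0 < d0) by (unfold d0; lra).
    destruct HZ as [Z0 [Z1 [Z2 Z3]]].
    destruct (E1 a d0 Hd0) as [ya Hya]. destruct (E1 b d0 Hd0) as [yb Hyb].
    assert (Hinv : forall z, chain d0 ya z -> dist (f a) (g z) < r + d0).
    { intros z Hc. induction Hc as [y|y z w Hc IH Hzw]; auto.
      destruct (E2 w d0 Hd0) as [c Hc'].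
      assert (dist (f a) (f c) < t).
      { pose proof (Z3 (f a) (g z) (f c)). pose proof (Z3 (g z) (g w) (f c)).
        rewrite (Z2 (g w) (f c)) in *. rewrite Hg in *. unfold d0 in *. lra. }
      rewrite Hf in H. apply HS0 in H. rewrite <- Hf in H. apply Z1 in H. rewrite H. exact Hc'. }
    specialize (Hinv yb (HYc d0 Hd0 ya yb)).
    pose proof (Z3 (f a) (g yb) (f b)). rewrite (Z2 (g yb) (f b)) in H. rewrite Hf in H.
    unfold d0 in *. lra.
  - intros eps Heps. apply GH_upper; auto.
    all: first [lra | exact (inhabits a) | intros a0 a'; specialize (HSt a0 a'); lra | intros y y'; specialize (HYt y y'); lra].
Qed.

Lemma le_eps x b : (forall d, 0 < d -> x < b + d) -> x <= b.
Proof. intros H. apply Rnot_lt_le. intros Hl. specialize (H (x - b)). lra. Qed.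

Lemma ghB (S Y : MSpace) D : is_metric S -> inhabited S -> (forall a c : S, dist a c = 0) ->
  is_metric Y -> inhabited Y -> is_lub (fun r => exists y y' : Y, r = dist y y') D ->
  dGH S Y = D / 2.
Proof.
  intros HSm [s0] HS0 HYm [y0] [Hub Hlub].
  assert (HD : 0 <= D). { eapply Rle_trans; [|apply Hub; exists y0, y0; eauto]. apply HYm. }
  rewrite dGH_unfold. apply Rinf_char.
  - intros r [Z [f [g [HZ [Hf [Hg Hr]]]]]].
    assert (HYb : forall y y' : Y, dist y y' <= D) by (intros; apply Hub; eauto).
    assert (HSb : forall a a' : S, dist a a' <= 0) by (intros; rewrite HS0; lra).
    destruct (GH_extract S Y Z f g 0 D r HZ Hf Hg (inhabits s0) (inhabits y0) HSb HYb Hr) as [E1 E2].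
    destruct HZ as [Z0 [Z1 [Z2 Z3]]].
    assert (D <= 2 * r); [|lra].
    apply Hlub. intros x [y [y' ->]]. apply le_eps. intros d Hd.
    destruct (E2 y (d/2)) as [a Ha]. lra.
    destruct (E2 y' (d/2)) as [a' Ha']. lra.
    assert (f a = f a') by (apply Z1; rewrite Hf; auto). rewrite H in Ha.
    rewrite <- Hg. pose proof (Z3 (g y) (f a') (g y')). rewrite (Z2 (g y) (f a')) in H0. lra.
  - intros eps Heps. apply GH_upper; auto.
    all: first [lra | exact (inhabits s0) | exact (inhabits y0) | intros; rewrite HS0; lra | intros y y'; assert (dist y y' <= D) by (apply Hub; eauto); lra].
Qed.

Fixpoint Lseq {X : Type} (pick : list X -> X) (n : nat) : list X :=
  match n with O => nil | S n => pick (Lseq pick n) :: Lseq pick n end.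

Lemma Lseq_in {X : Type} (pick : list X -> X) m n : (m < n)%nat -> In (pick (Lseq pick m)) (Lseq pick n).
Proof.
  induction n; intros H. lia.
  simpl. destruct (Nat.eq_dec m n) as [->|Hne]. left; auto. right. apply IHn. lia.
Qed.

Lemma totally_bounded (X : MSpace) : is_metric X -> compact X ->
  forall d, 0 < d -> exists F : list X, forall x, exists y, In y F /\ dist x y < d.
Proof.
  intros [X0 [X1 [X2 X3]]] Hc d Hd. apply NNPP. intros Hn.
  assert (H : forall F : list X, exists x, forall y, In y F -> d <= dist x y).
  { intros F. apply NNPP. intros Hn2. apply Hn. exists F. intros x.
    apply NNPP. intros Hn3. apply Hn2. exists x. intros y Hy.
    apply Rnot_lt_le. intros Hl. apply Hn3. eauto. }
  set (pick := fun F => proj1_sig (constructive_indefinite_description _ (H F))).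
  assert (Hp : forall F y, In y F -> d <= dist (pick F) y).
  { intros F. exact (proj2_sig (constructive_indefinite_description _ (H F))). }
  set (u := fun n => pick (Lseq pick n)).
  destruct (Hc u) as [phi [l [Hphi Hl]]].
  destruct (Hl (d/2)) as [N HN]. lra.
  pose proof (HN N (le_n _)). pose proof (HN (S N) (le_S _ _ (le_n _))).
  pose proof (Hp (Lseq pick (phi (S N))) (u (phi N)) (Lseq_in pick _ _ (Hphi N))).
  fold (u (phi (S N))) in H2.
  pose proof (X3 (u (phi (S N))) l (u (phi N))). rewrite (X2 l (u (phi N))) in H3. lra.
Qed.

Definition sumd {X : MSpace} (x0 : X) (F : list X) := fold_right (fun y s => dist x0 y + s) 0 F.

Lemma sumd_ge {X : MSpace} (hX : nonnegd X) (x0 : X) F y : In y F -> dist x0 y <= sumd x0 F.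
Proof.
  induction F as [|z F IH]; simpl; intros H. contradiction.
  assert (0 <= sumd x0 F) by (clear IH H; induction F; simpl; [lra|pose proof (hX x0 a); lra]).
  destruct H as [->|H]. lra. pose proof (IH H). pose proof (hX x0 z). lra.
Qed.

Lemma compact_bounded (X : MSpace) : is_metric X -> compact X -> inhabited X ->
  exists M, forall x y : X, dist x y <= M.
Proof.
  intros HX Hc [x0].
  destruct (totally_bounded X HX Hc 1 Rlt_0_1) as [F HF].
  assert (hn : nonnegd X) by (unfold nonnegd; apply HX).
  destruct HX as [X0 [X1 [X2 X3]]].
  exists (2 + 2 * sumd x0 F). intros x x'.
  destruct (HF x) as [y [Hy Hxy]]. destruct (HF x') as [y' [Hy' Hxy']].
  pose proof (sumd_ge hn x0 F y Hy). pose proof (sumd_ge hn x0 F y' Hy').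
  pose proof (X3 x y x'). pose proof (X3 y x0 x'). pose proof (X3 x0 y' x').
  rewrite (X2 y x0) in *. rewrite (X2 y' x') in *. lra.
Qed.

Lemma connected_chained (X : MSpace) : is_metric X -> connected X -> chained X.
Proof.
  intros [X0 [X1 [X2 X3]]] Hc e He y0 w.
  destruct (Hc (chain e y0)) as [H|H].
  - intros x Hx. exists e. split; auto. intros y Hy. eapply ch_step; eauto.
  - intros x Hx. destruct (Hx e He) as [a [Ha Hd]]. eapply ch_step; eauto. rewrite X2; auto.
  - auto.
  - exfalso. apply (H y0). constructor.
Qed.

Lemma diam_lub (X : MSpace) : inhabited X -> (exists M, forall x y : X, dist x y <= M) ->
  is_lub (fun r => exists x y : X, r = dist x y) (diam X).
Proof.
  intros [x0] [M HM]. apply Rsup_lub. exists (dist x0 x0), x0, x0; auto.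
  exists M. intros r [x [y ->]]. auto.
Qed.

Lemma closed_union {X : MSpace} (A B : X -> Prop) : is_closed A -> is_closed B -> is_closed (fun x => A x \/ B x).
Proof.
  intros HA HB x Hx. apply NNPP. intros Hn.
  assert (nA : ~ A x) by tauto. assert (nB : ~ B x) by tauto.
  assert (exists e1, 0 < e1 /\ forall a, A a -> e1 <= dist x a) as [e1 [He1 H1]].
  { apply NNPP. intros Hn2. apply nA. apply HA. intros eps Heps. apply NNPP. intros Hn3.
    apply Hn2. exists eps. split; auto. intros a Ha. apply Rnot_lt_le. intros Hl. apply Hn3; eauto. }
  assert (exists e2, 0 < e2 /\ forall a, B a -> e2 <= dist x a) as [e2 [He2 H2]].
  { apply NNPP. intros Hn2. apply nB. apply HB. intros eps Heps. apply NNPP. intros Hn3.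
    apply Hn2. exists eps. split; auto. intros a Ha. apply Rnot_lt_le. intros Hl. apply Hn3; eauto. }
  destruct (Hx (Rmin e1 e2)) as [a [[Ha|Ha] Hd]].
  apply Rmin_glb_lt; auto.
  - specialize (H1 a Ha). pose proof (Rmin_l e1 e2). lra.
  - specialize (H2 a Ha). pose proof (Rmin_r e1 e2). lra.
Qed.

Lemma closed_single {X : MSpace} (hX : is_metric X) (a : X) : is_closed (fun x => x = a).
Proof.
  intros x Hx. destruct hX as [X0 [X1 _]]. apply X1. apply Rle_antisym; [|apply X0].
  apply le_eps. intros d Hd. destruct (Hx d Hd) as [b [-> Hb]]. lra.
Qed.

Lemma closed_full {X : MSpace} : is_closed (fun _ : X => True).
Proof. intros x _; exact I. Qed.

Definition addp {X : MSpace} (hX : is_metric X) (C : hyperspace X) (x : X) : hyperspace X.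
Proof.
  refine (exist _ (fun y => proj1_sig C y \/ y = x) _).
  destruct C as [C [HC [c Hc]]]. split.
  - apply closed_union; auto. apply closed_single; auto.
  - exists c. simpl. auto.
Defined.

Lemma addp_close {X : MSpace} (hX : is_metric X) (C : hyperspace X) c x e :
  proj1_sig C c -> dist c x < e -> dist C (addp hX C x) < e.
Proof.
  intros Hc Hd. simpl.
  assert (hn : nonnegd X) by (unfold nonnegd; apply hX).
  assert (H0 : forall y : X, dist y y = 0) by (intros; apply hX; auto).
  eapply Rle_lt_trans; [|exact Hd].
  apply haus_le; auto.
  - exists c; auto.
  - exists c; simpl; auto.
  - intros a Ha d Hdd. exists a. split. simpl; auto. rewrite H0. pose proof (hn c x). lra.
  - intros b [Hb| ->] d Hdd.
    + exists b. split; auto. rewrite H0. pose proof (hn c x). lra.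
    + exists c. split; auto. lra.
Qed.

Lemma chain_trans {Y : MSpace} e (y z w : Y) : chain e y z -> chain e z w -> chain e y w.
Proof. intros H1 H2. induction H2 as [|a b c H IH Hd]; auto. eapply ch_step; [apply IH; exact H1|exact Hd]. Qed.

Lemma chain_sym {Y : MSpace} (hY : is_metric Y) e (y z : Y) : chain e y z -> chain e z y.
Proof.
  intros H. induction H. constructor.
  eapply chain_trans; [|exact IHchain]. eapply ch_step. constructor. destruct hY as [_ [_ [H2 _]]].
  rewrite H2; auto.
Qed.

Lemma path_grow {X : MSpace} (hX : is_metric X) e (c x : X) : chain e c x ->
  forall C : hyperspace X, proj1_sig C c -> exists C', (forall y, proj1_sig C y -> proj1_sig C' y) /\
   proj1_sig C' x /\ chain e C C'.
Proof.
  intros H. induction H as [y|y z w Hc IH Hzw]; intros C HC.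
  - exists C. split; auto. split; auto. constructor.
  - destruct (IH C HC) as [C1 [H1 [H2 H3]]].
    exists (addp hX C1 w). split; [|split].
    + intros v Hv. simpl. auto.
    + simpl. auto.
    + eapply ch_step; eauto. apply (addp_close hX C1 z w e H2 Hzw).
Qed.

Lemma net_grow {X : MSpace} (hX : is_metric X) (hc : chained X) e (He : 0 < e) (F : list X) :
  forall (A : hyperspace X) a, proj1_sig A a -> exists C', (forall y, proj1_sig A y -> proj1_sig C' y) /\
   (forall y, In y F -> proj1_sig C' y) /\ chain e A C'.
Proof.
  induction F as [|y F IH]; intros A a Ha.
  - exists A. split; auto. split. intros y []. constructor.
  - destruct (IH A a Ha) as [C1 [H1 [H2 H3]]].
    destruct (path_grow hX e a y (hc e He a y) C1 (H1 a Ha)) as [C2 [K1 [K2 K3]]].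
    exists C2. split; [|split]; auto.
    + intros v [<-|Hv]; auto.
    + eapply chain_trans; eauto.
Qed.

Definition fullH (X : MSpace) (x0 : X) : hyperspace X :=
  exist _ (fun _ => True) (conj closed_full (ex_intro _ x0 I)).

Lemma hyper_chained (X : MSpace) (hX : is_metric X) (Hc : compact X) (x0 : X) (M : R)
  (HM : forall x y : X, dist x y <= M) : chained X -> chained (hyperspace X).
Proof.
  intros hc e He.
  assert (hn : nonnegd X) by (unfold nonnegd; apply hX).
  destruct (totally_bounded X hX Hc (e/2)) as [F HF]. lra.
  assert (Hall : forall A : hyperspace X, chain e A (fullH X x0)).
  { intros [A [HA [a Ha]]].
    destruct (net_grow hX hc e He F (exist _ A (conj HA (ex_intro _ a Ha))) a Ha) as [C [H1 [H2 H3]]].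
    eapply ch_step; [exact H3|].
    apply Rle_lt_trans with (e/2); [|lra].
    destruct C as [C [HC [c Hc']]]. simpl in *.
    apply haus_le; auto.
    - exists c; auto.
    - exists x0; auto.
    - intros v Hv d Hd. exists v. split; auto. assert (dist v v = 0) by (apply hX; auto). lra.
    - intros v _ d Hd. destruct (HF v) as [y [Hy Hvy]]. exists y. split; auto.
      destruct hX as [_ [_ [X2 _]]]. rewrite X2. lra. }
  intros A B. eapply chain_trans. apply Hall. apply chain_sym. apply (hyper_metric X hX M HM). apply Hall.
Qed.

Lemma simplex_metric t p : 0 < t -> is_metric (simplex t p).
Proof.
  intros Ht. split; [|split; [|split]]; simpl.
  - intros [i Hi] [j Hj]; simpl. destruct Nat.eq_dec; lra.
  - intros [i Hi] [j Hj]; simpl. destruct (Nat.eq_dec i j) as [E|Hn]; split; intros H; try lra.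
    + subst j. f_equal. apply proof_irrelevance.
    + injection H; intros; contradiction.
  - intros [i Hi] [j Hj]; simpl. destruct (Nat.eq_dec i j); destruct (Nat.eq_dec j i); subst; auto; congruence.
  - intros [i Hi] [j Hj] [k Hk]; simpl.
    destruct (Nat.eq_dec i k); destruct (Nat.eq_dec i j); destruct (Nat.eq_dec j k); subst; try lra; congruence.
Qed.

Lemma simplex_le t p : 0 < t -> forall a c : simplex t p, dist a c <= t.
Proof. intros Ht [i Hi] [j Hj]; simpl. destruct Nat.eq_dec; lra. Qed.

Lemma simplex_lt t p : forall a c : simplex t p, dist a c < t -> dist a c = 0.
Proof. intros [i Hi] [j Hj]; simpl. destruct Nat.eq_dec; lra. Qed.

Lemma simplex_two t p : (2 <= p)%nat -> exists a b : simplex t p, t <= dist a b.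
Proof.
  intros Hp. assert (H0 : (0 < p)%nat) by lia. assert (H1 : (1 < p)%nat) by lia.
  exists (exist (fun i => (i < p)%nat) 0%nat H0), (exist (fun i => (i < p)%nat) 1%nat H1). simpl.
  destruct (Nat.eq_dec 0 1); [discriminate|lra].
Qed.

Lemma simplex_one t : forall a c : simplex t 1, dist a c = 0.
Proof.
  intros [i Hi] [j Hj]; simpl. assert (i = 0%nat) by lia. assert (j = 0%nat) by lia. subst.
  destruct Nat.eq_dec; [lra|congruence].
Qed.

Definition singH {X : MSpace} (hX : is_metric X) (x : X) : hyperspace X :=
  exist _ (fun y => y = x) (conj (closed_single hX x) (ex_intro _ x eq_refl)).

Lemma hyp_le {X : MSpace} (hX : is_metric X) t : (forall x y : X, dist x y <= t) ->
  forall A B : hyperspace X, dist A B <= t.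
Proof.
  intros H [A [HA [a Ha]]] [B [HB [b Hb]]]. simpl. apply haus_le; eauto.
  unfold nonnegd; apply hX.
  - intros x Hx d Hd. exists b. split; auto. specialize (H x b). lra.
  - intros y Hy d Hd. exists a. split; auto. specialize (H a y). lra.
Qed.

Lemma hyp_lt {X : MSpace} (hX : is_metric X) t : (forall x y : X, dist x y <= t) ->
  (forall x y : X, dist x y < t -> dist x y = 0) ->
  forall A B : hyperspace X, dist A B < t -> dist A B = 0.
Proof.
  intros H H0 A B Hlt. pose proof (hyper_metric X hX t H) as HHm.
  apply Rle_antisym; [|apply HHm].
  assert (hn : nonnegd X) by (unfold nonnegd; apply hX).
  revert Hlt. destruct A as [A [HA [a Ha]]], B as [B [HB [b Hb]]]. simpl. intros Hlt.
  apply haus_le; eauto.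
  - intros x Hx d Hd.
    destruct (haus_ext1 hn A B t _ (ex_intro _ b Hb) (fun x y _ _ => H x y) (Rle_refl _) x Hx (t - hausdorff A B)) as [y [Hy Hxy]]. lra.
    exists y. split; auto. rewrite H0; lra.
  - intros y Hy d Hd.
    destruct (haus_ext2 hn A B t _ (ex_intro _ a Ha) (fun x y _ _ => H x y) (Rle_refl _) y Hy (t - hausdorff A B)) as [x [Hx Hxy]]. lra.
    exists x. split; auto. rewrite H0; lra.
Qed.

Lemma hyp_two {X : MSpace} (hX : is_metric X) t : (forall x y : X, dist x y <= t) ->
  (exists a b : X, t <= dist a b) -> exists A B : hyperspace X, t <= dist A B.
Proof.
  intros H [a [b Hab]]. exists (singH hX a), (singH hX b). simpl.
  assert (hn : nonnegd X) by (unfold nonnegd; apply hX).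
  eapply Rle_trans; [|apply (haus_ge1 hn (fun y => y = a) (fun y => y = b) t (ex_intro _ b eq_refl) (fun x y _ _ => H x y) a eq_refl)].
  apply inner_ge. exists b; auto. intros y ->. auto.
Qed.

Lemma hyp_zero {X : MSpace} (hX : is_metric X) : inhabited X -> (forall x y : X, dist x y = 0) ->
  forall A B : hyperspace X, dist A B = 0.
Proof.
  intros _ H A B. apply Rle_antisym.
  - apply hyp_le; auto. intros; rewrite H; lra.
  - apply (hyper_metric X hX 0). intros; rewrite H; lra.
Qed.

Lemma hyp_diam (X : MSpace) (hX : is_metric X) (x0 : X) M : (forall x y : X, dist x y <= M) ->
  is_lub (fun r => exists A B : hyperspace X, r = dist A B) (diam X).
Proof.
  intros HM. pose proof (diam_lub X (inhabits x0) (ex_intro _ M HM)) as [Hub Hl].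
  assert (hn : nonnegd X) by (unfold nonnegd; apply hX).
  split.
  - intros r [A [B ->]]. apply hyp_le; auto. intros; apply Hub; eauto.
  - intros u Hu. apply Hl. intros r [x [y ->]].
    eapply Rle_trans; [|apply Hu; exists (singH hX x), (singH hX y); reflexivity].
    simpl. eapply Rle_trans; [|apply (haus_ge1 hn (fun z => z = x) (fun z => z = y) M (ex_intro _ y eq_refl) (fun x y _ _ => HM x y) x eq_refl)].
    apply inner_ge. exists y; auto. intros z ->. lra.
Qed.

Theorem mainTheorem17 (X : MSpace) (HX : continuum X) (t : R) (p : nat)
  (ht : diam X <= t) (ht0 : 0 < t) (hp : (1 <= p)%nat) :
  dGH (simplex t p) X = dGH (hyperspace (simplex t p)) (hyperspace X).
Proof.
  destruct HX as [Xm [[x0] [Xc Xconn]]].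
  destruct (compact_bounded X Xm Xc (inhabits x0)) as [M HM].
  pose proof (diam_lub X (inhabits x0) (ex_intro _ M HM)) as Dl.
  assert (Xt : forall x y : X, dist x y <= t).
  { intros x y. apply Rle_trans with (diam X); auto. apply Dl. eauto. }
  pose proof (simplex_metric t p ht0) as Sm.
  pose proof (hyper_metric _ Sm t (simplex_le t p ht0)) as HSm.
  pose proof (hyper_metric X Xm M HM) as HXm.
  assert (HXi : inhabited (hyperspace X)) by exact (inhabits (fullH X x0)).
  destruct (Nat.eq_dec p 1) as [->|Hp2].
  - rewrite (ghB _ _ (diam X) Sm (inhabits ((exist (fun i => (i < 1)%nat) 0%nat (Nat.lt_0_succ 0)) : simplex t 1)) (simplex_one t) Xm (inhabits x0) Dl).
    rewrite (ghB _ _ (diam X) HSm (inhabits (fullH _ ((exist (fun i => (i < 1)%nat) 0%nat (Nat.lt_0_succ 0)) : simplex t 1))) (hyp_zero Sm (inhabits ((exist (fun i => (i < 1)%nat) 0%nat (Nat.lt_0_succ 0)) : simplex t 1)) (simplex_one t)) HXm HXi (hyp_diam X Xm x0 M HM)).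
    reflexivity.
  - assert (Hp : (2 <= p)%nat) by lia.
    rewrite (ghA _ _ t ht0 Sm (simplex_le t p ht0) (simplex_lt t p) (simplex_two t p Hp) Xm (inhabits x0) Xt (connected_chained X Xm Xconn)).
    rewrite (ghA _ _ t ht0 HSm (hyp_le Sm t (simplex_le t p ht0)) (hyp_lt Sm t (simplex_le t p ht0) (simplex_lt t p))
      (hyp_two Sm t (simplex_le t p ht0) (simplex_two t p Hp)) HXm HXi (hyp_le Xm t Xt)
      (hyper_chained X Xm Xc x0 M HM (connected_chained X Xm Xconn))).
    reflexivity.
Qed.
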